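(* Let $a,b,d>0$, $c\in\mathbb{R}$, and let $\phi(x)=\frac{ax^3+bx^2+cx+d}{x^3}$ for $x>0$. \begin{description} \item[(a)] The cubic polynomial $Q(x)=(4a)x^3-(b^2)x^2-(18abd)x+27a^2d^2+4db^3$ has a unique negative zero. \item[(b)] Let $c_{-}$ denote the unique negative zero of $Q$. If $c>c_{-}$, then for every initial value $x_0>0$ all iterates of $x_{n+1}=\phi(x_n)$ are positive, i.e. nonpositive iterates never occur. \item[(c)] Let $c^{*}=-\sqrt{3bd}$. Then $c_{-}<c^{*}$. \item[(d)] If $c\geq c^{*}$ then $\phi$ is decreasing on $(0,\infty)$ and has a unique (positive) equilibrium. If $c_{-}<c<c^{*}$ then $\phi$ has a local minimum point $x_m$ and a local maximum point $x_M$, where $$0<x_{m}=\frac{-c-\sqrt{c^2-3bd}}{b}<x_{M}=\frac{-c+\sqrt{c^2-3bd}}{b}.$$ \end{description}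
   Context: The map $\phi$ is the right-hand side of the difference equation $x_{n+1}=\frac{ax_n^3+bx_n^2+cx_n+d}{x_n^3}$, $x_0>0$. An equilibrium of $\phi$ is a point $t>0$ with $\phi(t)=t$. *)

(* Defs.v *)
From HB Require Import structures.
From mathcomp Require Import all_boot all_order all_algebra.
Set Implicit Arguments. Unset Strict Implicit. Unset Printing Implicit Defensive.
Import Order.TTheory GRing.Theory Num.Theory.
Local Open Scope ring_scope.

Definition phi (R : rcfType) (a b c d : R) (x : R) : R :=
  (a * x ^+ 3 + b * x ^+ 2 + c * x + d) / x ^+ 3.

Definition Qpol (R : rcfType) (a b d : R) (x : R) : R :=
  4 * a * x ^+ 3 - b ^+ 2 * x ^+ 2 - 18 * a * b * d * x
  + 27 * a ^+ 2 * d ^+ 2 + 4 * d * b ^+ 3.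

Definition cstar (R : rcfType) (b d : R) : R := - Num.sqrt (3 * b * d).

Definition local_min_pt (R : rcfType) (f : R -> R) (x : R) : Prop :=
  exists2 e : R, 0 < e & forall y, 0 < y -> `|y - x| < e -> f x <= f y.
Definition local_max_pt (R : rcfType) (f : R -> R) (x : R) : Prop :=
  exists2 e : R, 0 < e & forall y, 0 < y -> `|y - x| < e -> f y <= f x.

(* Main.v *)
Require Import Defs.
From HB Require Import structures.
From mathcomp Require Import all_boot all_order all_algebra.
From mathcomp Require Import ring lra.
Import Order.TTheory GRing.Theory Num.Theory.
Local Open Scope ring_scope.

Section S.
Variable R : rcfType.

Lemma ivt4 (e4 e3 e2 e1 e0 l r : R) :
  l <= r -> e4 * l ^+ 4 + e3 * l ^+ 3 + e2 * l ^+ 2 + e1 * l + e0 <= 0 <=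
   e4 * r ^+ 4 + e3 * r ^+ 3 + e2 * r ^+ 2 + e1 * r + e0 ->
  exists2 x, l <= x <= r & e4 * x ^+ 4 + e3 * x ^+ 3 + e2 * x ^+ 2 + e1 * x + e0 = 0.
Proof.
pose f := fun x => e4 * x ^+ 4 + e3 * x ^+ 3 + e2 * x ^+ 2 + e1 * x + e0.
move=> lr H.
pose p : {poly R} := e4%:P * 'X^4 + e3%:P * 'X^3 + e2%:P * 'X^2 + e1%:P * 'X + e0%:P.
have pE x : p.[x] = f x by rewrite /p /f !hornerE.
have [|x Hx /rootP px] := @poly_ivt R p l r lr; first by rewrite !pE /f.
by exists x => //; rewrite -/(f x) -pE.
Qed.

Variables a b d : R.
Hypotheses (ha : 0 < a) (hb : 0 < b) (hd : 0 < d).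

Definition P (r t : R) := 4*a*(t^+2+t*r+r^+2) - b^+2*(t+r) - 18*a*b*d.

Lemma Q_fact r t : Qpol a b d r = 0 -> Qpol a b d t = (t - r) * P r t.
Proof.
move=> H; have -> : Qpol a b d t = Qpol a b d t - Qpol a b d r by rewrite H subr0.
rewrite /Qpol /P; ring.
Qed.

Lemma K_pos : 0 < 27 * a ^+ 2 * d ^+ 2 + 4 * d * b ^+ 3.
Proof. by apply: addr_gt0; rewrite ?mulr_gt0 ?exprn_gt0. Qed.

Lemma P_pos r t : r < 0 -> Qpol a b d r = 0 -> t <= 0 -> 0 < P r t.
Proof.
move=> hr H ht.
have K := K_pos.
set P0 := 4*a*r^+2 - b^+2*r - 18*a*b*d.
have e : r * P0 = - (27 * a ^+ 2 * d ^+ 2 + 4 * d * b ^+ 3).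
  by rewrite -[LHS]subr0 -H /Qpol /P0; ring.
have P0p : 0 < P0.
  clearbody P0; nra.
have -> : P r t = 4*a*t^+2 + 4*a*(t*r) + b^+2 * (-t) + P0 by rewrite /P /P0; ring.
have h1 : 0 <= a * t^+2 by rewrite mulr_ge0 ?sqr_ge0 ?ltW.
have h2 : 0 <= t * r by nra.
have h3 : 0 <= a * (t * r) by apply: mulr_ge0 => //; apply: ltW.
have h4 : 0 <= b^+2 * (-t) by rewrite mulr_ge0 ?sqr_ge0 ?oppr_ge0.
clearbody P0; lra.
Qed.

Lemma Q_le_root r t : r < 0 -> Qpol a b d r = 0 -> t < 0 -> Qpol a b d t <= 0 -> t <= r.
Proof.
move=> hr H ht hq; rewrite (@Q_fact r t H) in hq.
have hp := @P_pos r t hr H (ltW ht).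
rewrite leNgt; apply/negP => htr.
have : 0 < (t - r) * P r t by rewrite mulr_gt0 // subr_gt0.
by rewrite ltNge hq.
Qed.

Lemma root_uniq r1 r2 : r1 < 0 -> Qpol a b d r1 = 0 -> r2 < 0 -> Qpol a b d r2 = 0 -> r2 = r1.
Proof.
move=> h1 H1 h2 H2; apply/eqP; rewrite eq_le.
by rewrite (@Q_le_root r1 r2 h1 H1 h2) ?H2 // (@Q_le_root r2 r1 h2 H2 h1) ?H1.
Qed.

Lemma root_ex : exists r, r < 0 /\ Qpol a b d r = 0.
Proof.
set K := 27 * a ^+ 2 * d ^+ 2 + 4 * d * b ^+ 3.
have Kp : 0 < K := K_pos.
set X := (18*a*b*d + K) / (4*a).
have Xp : 0 < X by rewrite divr_gt0 // ?addr_gt0 ?mulr_gt0.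
have eX : 18*a*b*d = 4*a*X - K by rewrite /X; field; rewrite gt_eqF.
clearbody X.
set s := 1 + X.
have hs : Qpol a b d (-s) = -(4*a*s*(X^+2+X+1) + b^+2*s^+2 + K*X) + s*(18*a*b*d - (4*a*X - K)).
  by rewrite /Qpol /s /K; ring.
have Qs : Qpol a b d (-s) < 0.
  rewrite hs eX subrr mulr0 addr0 oppr_lt0.
  have : 0 < 4*a*s*(X^+2+X+1) by rewrite !mulr_gt0 // ?addr_gt0 ?exprn_gt0.
  have : 0 <= b^+2 * s^+2 by rewrite mulr_ge0 ?sqr_ge0.
  have : 0 < K * X by rewrite mulr_gt0.
  lra.
have sp : 0 < s by rewrite /s addr_gt0.
have l1 : -s <= 0 by rewrite oppr_le0 ltW.
have l2 : Qpol a b d (-s) = 0 * (-s)^+4 + 4*a*(-s)^+3 + (-b^+2)*(-s)^+2 + (-(18*a*b*d))*(-s) + K by rewrite /Qpol /K; ring.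
have l3 : K = 0 * 0^+4 + 4*a*0^+3 + (-b^+2)*0^+2 + (-(18*a*b*d))*0 + K by rewrite !expr0n /= !mulr0 !add0r.
have l4 : 0 * (-s)^+4 + 4*a*(-s)^+3 + (-b^+2)*(-s)^+2 + (-(18*a*b*d))*(-s) + K <= 0 <= 0 * 0^+4 + 4*a*0^+3 + (-b^+2)*0^+2 + (-(18*a*b*d))*0 + K.
  by rewrite -l2 -l3 (ltW Qs) ltW.
have [x /andP [x1 x2] fx] := @ivt4 0 (4*a) (-b^+2) (-(18*a*b*d)) K (-s) 0 l1 l4.
have Qx : Qpol a b d x = 0 by rewrite -fx /Qpol /K; ring.
exists x; split => //.
rewrite lt_neqAle x2 andbT; apply/eqP => x0.
by move: Qx; rewrite x0 /Qpol -/K !expr0n /= !mulr0 !subr0 !add0r => /eqP; rewrite gt_eqF.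
Qed.

Variable c : R.

Lemma phi_u x : x != 0 ->
  phi a b c d x = a + b * x^-1 + c * x^-1 ^+ 2 + d * x^-1 ^+ 3.
Proof. by move=> hx; rewrite /phi; field. Qed.

Lemma phi_pos cm x : cm < 0 -> Qpol a b d cm = 0 -> cm < c -> 0 < x -> 0 < phi a b c d x.
Proof.
move=> hcm H hc hx.
have x0 : x != 0 by rewrite gt_eqF.
set k := - (a * x^+3 + b * x^+2 + d) / x.
have kneg : k < 0.
  rewrite /k mulNr oppr_lt0 divr_gt0 // !addr_gt0 // mulr_gt0 // exprn_gt0 //.
have Qk : Qpol a b d k = - (2*a*x^+2 + b*x - d/x)^+2 * ((b+a*x)^+2 + 4*a*d/x).
  by rewrite /Qpol /k; field.
have Qk0 : Qpol a b d k <= 0.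
  rewrite Qk mulNr oppr_le0 mulr_ge0 ?sqr_ge0 // addr_ge0 ?sqr_ge0 // ltW //.
  by rewrite !mulr_gt0 ?invr_gt0.
have := @Q_le_root cm k hcm H kneg Qk0 => hk.
have ckc : k < c by apply: le_lt_trans hc.
have N : 0 < a * x^+3 + b * x^+2 + c * x + d.
  have -> : a * x^+3 + b * x^+2 + c * x + d = x * (c - k) by rewrite /k; field.
  by rewrite mulr_gt0 // subr_gt0.
by rewrite /phi divr_gt0 // exprn_gt0.
Qed.

Lemma phi_decr x y : - Num.sqrt (3 * b * d) <= c -> 0 < x -> x < y -> phi a b c d y < phi a b c d x.
Proof.
move=> hc hx hxy.
have hy : 0 < y by apply: lt_trans hxy.
set u := x^-1. set v := y^-1.
have up : 0 < u by rewrite invr_gt0.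
have vp : 0 < v by rewrite invr_gt0.
have uv : v < u by rewrite /u /v ltf_pV2 // ?posrE.
have x0 : x != 0 by rewrite gt_eqF.
have y0 : y != 0 by rewrite gt_eqF.
rewrite (@phi_u x x0) (@phi_u y y0) -/u -/v.
rewrite -subr_gt0; clearbody u v.
have -> : a + b * u + c * u ^+ 2 + d * u ^+ 3 - (a + b * v + c * v ^+ 2 + d * v ^+ 3)
  = (u - v) * (b + c * (u + v) + d * (u^+2 + u*v + v^+2)) by ring.
rewrite mulr_gt0 // ?subr_gt0 //.
have h1 : 0 < d * (u - v)^+2 by rewrite mulr_gt0 // exprn_gt0 // subr_gt0.
have e1 : d * (u^+2 + u*v + v^+2) = 3/4 * d * (u+v)^+2 + d * (u - v)^+2 / 4 by field.
rewrite e1.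
have h4 : 0 < d * (u - v) ^+ 2 / 4 by rewrite divr_gt0.
have key : 0 <= b + c * (u + v) + 3/4 * d * (u+v)^+2.
  have [c0|c0] := leP 0 c.
    have h6 : 0 <= c * (u + v) by rewrite mulr_ge0 // ltW // addr_gt0.
    have h5 : 0 <= 3/4 * d * (u+v)^+2.
      apply: mulr_ge0; last exact: sqr_ge0.
      by apply: mulr_ge0; [lra|exact: ltW].
    by rewrite addr_ge0 // addr_ge0 // ltW.
  have hc2 : c ^+ 2 <= 3 * b * d.
    have s0 := sqrtr_ge0 (3 * b * d).
    have -> : 3 * b * d = Num.sqrt (3 * b * d) ^+ 2.
      by rewrite sqr_sqrtr // !mulr_ge0 // ltW.
    rewrite -sqrrN ler_sqr ?nnegrE ?oppr_ge0 ?sqrtr_ge0 ?(ltW c0) //.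
    by rewrite -[X in _ <= X](opprK (Num.sqrt _)) lerN2.
  have e2 : 12 * d * (b + c * (u + v) + 3/4 * d * (u+v)^+2) = (3 * d * (u + v) + 2 * c) ^+ 2 + 4 * (3 * b * d - c^+2) by field.
  have h12 : 0 < 12 * d by rewrite mulr_gt0.
  rewrite -(pmulr_rge0 _ h12) e2 addr_ge0 ?sqr_ge0 // mulr_ge0 // subr_ge0.
  exact: hc2.
by rewrite addrA; apply: (le_lt_trans key); rewrite ltrDl.
Qed.

Lemma equil_ex : exists t, 0 < t /\ phi a b c d t = t.
Proof.
pose M := 1 + a + b + `|c| + d.
have M1 : 1 <= M.
  rewrite /M -!addrA lerDl !addr_ge0 ?normr_ge0 // ltW //.
have M0 : 0 < M by apply: lt_le_trans M1.
have M2 : 1 <= M ^+ 2 by rewrite exprn_ege1.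
have M3 : M <= M ^+ 3.
  by rewrite exprS ler_peMr // ?ltW // exprn_ege1.
have fM : 1 * M^+4 + (-a) * M^+3 + (-b) * M^+2 + (-c) * M + (-d)
   = M^+3 + b * M^+2 * (M - 1) + `|c| * (M^+3 - M) + (`|c| * M - c * M) + d * (M^+3 - 1).
  by rewrite /M; ring.
have l1 : 0 <= M by apply: ltW.
have l4 : 1 * 0^+4 + (-a) * 0^+3 + (-b) * 0^+2 + (-c) * 0 + (-d) <= 0 <=
          1 * M^+4 + (-a) * M^+3 + (-b) * M^+2 + (-c) * M + (-d).
  apply/andP; split.
    by rewrite !expr0n /= !mulr0 !add0r oppr_le0 ltW.
  rewrite fM.
  have p1 : 0 <= b * M^+2 * (M - 1) by rewrite !mulr_ge0 ?sqr_ge0 ?subr_ge0 // ltW.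
  have p2 : 0 <= `|c| * (M^+3 - M) by rewrite mulr_ge0 ?normr_ge0 ?subr_ge0.
  have p3 : 0 <= `|c| * M - c * M by rewrite -mulrBl mulr_ge0 ?subr_ge0 ?ler_norm.
  have p4 : 0 <= d * (M^+3 - 1).
    apply: mulr_ge0; [exact: ltW | rewrite subr_ge0; exact: le_trans M1 M3].
  have p0 := exprn_ge0 3 l1. clearbody M. lra.
have [t /andP [t1 t2] ft] := @ivt4 1 (-a) (-b) (-c) (-d) 0 M l1 l4.
have t0 : t != 0.
  apply/eqP => t0; move: ft; rewrite t0 !expr0n /= !mulr0 !add0r => /eqP.
  by rewrite oppr_eq0 gt_eqF.
exists t; split; first by rewrite lt_neqAle eq_sym t0.
rewrite /phi.
have -> : a * t ^+ 3 + b * t ^+ 2 + c * t + d = t ^+ 4.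
  by apply/eqP; rewrite -subr_eq0 -oppr_eq0 -ft; apply/eqP; ring.
by field.
Qed.

Lemma minmax : c < - Num.sqrt (3 * b * d) ->
  let xm := (- c - Num.sqrt (c ^+ 2 - 3 * b * d)) / b in
  let xM := (- c + Num.sqrt (c ^+ 2 - 3 * b * d)) / b in
  0 < xm /\ xm < xM /\
  local_min_pt (phi a b c d) xm /\ local_max_pt (phi a b c d) xM.
Proof.
move=> hc xm xM.
have exm : xm = (- c - Num.sqrt (c ^+ 2 - 3 * b * d)) / b by [].
have exM : xM = (- c + Num.sqrt (c ^+ 2 - 3 * b * d)) / b by [].
clearbody xm xM.
have bd : 0 <= 3 * b * d by rewrite !mulr_ge0 // ltW.
have hc2 : 3 * b * d < c ^+ 2.
  have s0 := sqrtr_ge0 (3 * b * d).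
  have ss := sqr_sqrtr bd.
  move: hc s0 ss; set q := Num.sqrt _; clearbody q => hc s0 ss.
  nra.
have c0 : c < 0.
  have s0 := sqrtr_ge0 (3 * b * d).
  move: hc s0; set q := Num.sqrt _; clearbody q => hc s0; lra.
have D : 0 < c ^+ 2 - 3 * b * d by rewrite subr_gt0.
have Sp : 0 < Num.sqrt (c ^+ 2 - 3 * b * d) by rewrite sqrtr_gt0.
have SS : Num.sqrt (c ^+ 2 - 3 * b * d) ^+ 2 = c ^+ 2 - 3 * b * d by rewrite sqr_sqrtr // ltW.
move: exm exM Sp SS; set S := Num.sqrt _; clearbody S => exm exM Sp SS.
have Sc : S < - c.
  have h1 : 0 < S - c by lra.
  have h2 : 0 < 3 * b * d by rewrite !mulr_gt0.
  nra.
have d0 : d != 0 by rewrite gt_eqF.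
have b0 : b != 0 by rewrite gt_eqF.
have e : (-c-S)*(-c+S) = 3*b*d.
  have -> : (-c-S)*(-c+S) = c^+2 - S^+2 by ring.
  by rewrite SS; ring.
have xm0 : 0 < xm by rewrite exm divr_gt0 // subr_gt0.
have xmM : xm < xM.
  by rewrite exm exM ltr_pM2r ?invr_gt0 // ltrD2l gtrN.
have xM0 : 0 < xM by apply: lt_trans xmM.
pose um := (- c + S) / (3 * d).
pose uM := (- c - S) / (3 * d).
have eum : xm^-1 = um.
  apply: (@mulfI _ xm); first by rewrite gt_eqF.
  rewrite mulfV ?gt_eqF // exm /um.
  have -> : (- c - S) / b * ((- c + S) / (3 * d)) = ((-c-S)*(-c+S)) / (3 * b * d).
    by field; rewrite d0 b0.
  by rewrite e divff // !mulf_neq0 // pnatr_eq0.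
have euM : xM^-1 = uM.
  apply: (@mulfI _ xM); first by rewrite gt_eqF.
  rewrite mulfV ?gt_eqF // exM /uM.
  have -> : (- c + S) / b * ((- c - S) / (3 * d)) = ((-c-S)*(-c+S)) / (3 * b * d).
    by field; rewrite d0 b0.
  by rewrite e divff // !mulf_neq0 // pnatr_eq0.
have crit : forall w, w = um \/ w = uM -> b + 2*c*w + 3*d*w^+2 = 0.
  move=> w hw.
  have -> : b + 2*c*w + 3*d*w^+2 = ((3*d*w)^+2 + 2*c*(3*d*w) + 3*b*d)/(3*d).
    by field; rewrite d0.
  case: hw => ->; rewrite /um /uM.
    have -> : 3 * d * ((- c + S) / (3 * d)) = -c + S by field; rewrite d0.
    have -> : (- c + S) ^+ 2 + 2 * c * (- c + S) + 3 * b * d = S^+2 - c^+2 + 3*b*d by ring.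
    rewrite SS; have -> : c^+2 - 3*b*d - c^+2 + 3*b*d = 0 by ring.
    by rewrite mul0r.
  have -> : 3 * d * ((- c - S) / (3 * d)) = -c - S by field; rewrite d0.
  have -> : (- c - S) ^+ 2 + 2 * c * (- c - S) + 3 * b * d = S^+2 - c^+2 + 3*b*d by ring.
  rewrite SS; have -> : c^+2 - 3*b*d - c^+2 + 3*b*d = 0 by ring.
    by rewrite mul0r.
have diff : forall y w, 0 < y -> w = um \/ w = uM -> phi a b c d y - (a + b * w + c * w^+2 + d * w^+3)
    = (y^-1 - w)^+2 * (d * y^-1 + c + 2 * d * w).
  move=> y w y0 hw.
  rewrite (@phi_u y (lt0r_neq0 y0)).
  have := crit w hw => cr.
  have -> : a + b * y^-1 + c * y^-1 ^+ 2 + d * y^-1 ^+ 3 - (a + b * w + c * w ^+ 2 + d * w ^+ 3)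
    = (y^-1 - w)^+2 * (d * y^-1 + c + 2 * d * w) + (y^-1 - w) * (b + 2*c*w + 3*d*w^+2) by ring.
  by rewrite cr mulr0 addr0.
have S1 : d * uM + c + 2 * d * um = S / 3 by rewrite /uM /um; field; rewrite d0.
have S2 : d * um + c + 2 * d * uM = - (S / 3) by rewrite /uM /um; field; rewrite d0.
have S3 : 0 < S / 3 by rewrite divr_gt0.
split => //; split => //; split.
  exists (xM - xm); first by rewrite subr_gt0.
  move=> y y0 hy.
  have yM : y < xM by have := ler_norm (y - xm); lra.
  have uu : uM < y^-1 by rewrite -euM ltf_pV2 // ?posrE.
  rewrite -subr_ge0 (@phi_u xm (lt0r_neq0 xm0)) eum (diff y um y0 (or_introl erefl)).
  rewrite mulr_ge0 ?sqr_ge0 //.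
  have : 0 < d * (y^-1 - uM) by rewrite mulr_gt0 // subr_gt0.
  move: S1 S3; clearbody um uM; move: (y^-1) => u; lra.
exists (xM - xm); first by rewrite subr_gt0.
move=> y y0 hy.
have ym : xm < y by have := ler_norm (xM - y); rewrite distrC in hy; lra.
have uu : y^-1 < um by rewrite -eum ltf_pV2 // ?posrE.
rewrite -subr_le0 (@phi_u xM (lt0r_neq0 xM0)) euM (diff y uM y0 (or_intror erefl)).
rewrite mulr_ge0_le0 ?sqr_ge0 //.
have : 0 < d * (um - y^-1) by rewrite mulr_gt0 // subr_gt0.
move: S2 S3; clearbody um uM; move: (y^-1) => u; lra.
Qed.

Lemma cm_lt_cstar cm : cm < 0 -> Qpol a b d cm = 0 -> cm < cstar b d.
Proof.
move=> hcm H.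
have bd : 0 <= 3 * b * d by rewrite !mulr_ge0 // ltW.
have s0 := sqrtr_ge0 (3 * b * d).
have ss := sqr_sqrtr bd.
rewrite /cstar.
have eQ : Qpol a b d (- Num.sqrt (3 * b * d)) = 6 * a * b * d * Num.sqrt (3 * b * d) + b^+3 * d + 27 * a^+2 * d^+2
   - (Num.sqrt (3 * b * d) ^+ 2 - 3 * b * d) * (4 * a * Num.sqrt (3 * b * d) + b ^+ 2).
  by rewrite /Qpol; ring.
rewrite ss subrr mul0r subr0 in eQ.
have Qp : 0 < Qpol a b d (- Num.sqrt (3 * b * d)).
  rewrite eQ addr_gt0 ?addr_ge0 // ?mulr_gt0 ?exprn_gt0 //.
  by rewrite ltr_wpDl ?mulr_gt0 ?exprn_gt0 // mulr_ge0 // !mulr_ge0 // ltW.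
rewrite ltNge; apply/negP => hle.
have := @P_pos cm (- Num.sqrt (3 * b * d)) hcm H.
rewrite oppr_le0 s0 => /(_ isT) hp.
move: Qp; rewrite (@Q_fact cm _ H).
have : (- Num.sqrt (3 * b * d) - cm) * P cm (- Num.sqrt (3 * b * d)) <= 0.
  by rewrite mulr_le0_ge0 ?subr_le0 // ltW.
by rewrite leNgt => /negbTE ->.
Qed.
End S.

Theorem theorem1 (R : rcfType) (a b c d : R) :
  0 < a -> 0 < b -> 0 < d ->
  (* (a) *)
  (exists! cm : R, cm < 0 /\ Qpol a b d cm = 0) /\
  forall cm : R, cm < 0 -> Qpol a b d cm = 0 ->
    (* (b) *)
    (cm < c -> forall x0 : R, 0 < x0 ->
       forall n : nat, 0 < iter n (phi a b c d) x0) /\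
    (* (c) *)
    cm < cstar b d /\
    (* (d), first case *)
    (cstar b d <= c ->
       (forall x y : R, 0 < x -> x < y -> phi a b c d y < phi a b c d x) /\
       (exists! t : R, 0 < t /\ phi a b c d t = t)) /\
    (* (d), second case *)
    (cm < c -> c < cstar b d ->
       let xm := (- c - Num.sqrt (c ^+ 2 - 3 * b * d)) / b in
       let xM := (- c + Num.sqrt (c ^+ 2 - 3 * b * d)) / b in
       0 < xm /\ xm < xM /\
       local_min_pt (phi a b c d) xm /\ local_max_pt (phi a b c d) xM).
Proof.
move=> ha hb hd; split.
  have [r [hr Hr]] := @root_ex _ _ _ _ ha hb hd.
  exists r; split => // r2 [h2 H2].
  by apply: (@root_uniq _ _ _ _ ha hb hd _ _ h2 H2 hr Hr).
move=> cm hcm H; split.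
  move=> hc x0 hx0; elim => [|n IH] //=.
  exact: (@phi_pos _ _ _ _ ha hb hd _ _ _ hcm H hc IH).
split; first exact: (@cm_lt_cstar _ _ _ _ ha hb hd _ hcm H).
split.
  move=> hc.
  have dec : forall x y : R, 0 < x -> x < y -> phi a b c d y < phi a b c d x.
    by move=> x y; apply: (@phi_decr _ _ _ _ hb hd).
  split => //.
  have [t [t0 ht]] := @equil_ex _ _ _ _ ha hb hd c.
  exists t; split => // t2 [t20 ht2].
  case: (ltgtP t t2) => // h.
    by have := dec _ _ t0 h; rewrite ht ht2 ltNge (ltW h).
  by have := dec _ _ t20 h; rewrite ht ht2 ltNge (ltW h).
move=> _ hc; exact: (@minmax _ _ _ _ hb hd _ hc).
Qed.
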